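(* Let $S$ be a compact convex subset of $\mathbb{R}^n_+$ with $0\in S$ and let $\Gamma\neq\mathbb{R}^n$ be a closed convex cone in $\mathbb{R}^n$ containing at least one point of $]0,\infty[^n$. Then $$\widehat S_\Gamma=(S-\Gamma^\circ)\cap\mathbb{R}^n_+,$$ and $\varphi_{\widehat S_\Gamma}(\xi)=\varphi_S(\xi)$ for every $\xi\in\Gamma$. Moreover, if for every $\xi\in\mathbb{R}^n$ and every extreme point $x$ of $\widehat S_\Gamma$ there exists $\eta\in\Gamma$ such that $\langle x,\xi\rangle\le\langle x,\eta\rangle$ and $\varphi_S(\eta)=\varphi_S(\xi)$, then $S=\widehat S_\Gamma$.
   Context: $\mathbb{R}_+=[0,\infty)$. For a set $T\subset\mathbb{R}^n$, $\varphi_T(\xi)=\sup_{t\in T}\langle t,\xi\rangle$. A cone is a set $\Gamma$ with $t\xi\in\Gamma$ for $\xi\in\Gamma$, $t\ge0$. The dual cone is $\Gamma^\circ=\{x\in\mathbb{R}^n\,;\,\langle x,\xi\rangle\ge0\ \forall\xi\in\Gamma\}$. The $\Gamma$-hull of $S\subset\mathbb{R}^n_+$ is $\widehat S_\Gamma=\{x\in\mathbb{R}^n_+\,;\,\langle x,\xi\rangle\le\varphi_S(\xi)\ \forall\xi\in\Gamma\}$, and $S-\Gamma^\circ=\{s-t\,;\,s\in S,t\in\Gamma^\circ\}$. *)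

(* Defs.v *)
From HB Require Import structures.
From mathcomp Require Import all_boot all_order all_algebra.
From mathcomp Require Import all_classical all_reals all_analysis.
Set Implicit Arguments. Unset Strict Implicit. Unset Printing Implicit Defensive.
Import Order.TTheory GRing.Theory Num.Theory.
Import numFieldNormedType.Exports.
Local Open Scope classical_set_scope.
Local Open Scope ring_scope.

Definition dotp (R : realType) (n : nat) (x y : 'rV[R]_n) : R :=
  \sum_(i < n) x ord0 i * y ord0 i.

Definition nonneg_orthant (R : realType) (n : nat) : set 'rV[R]_n :=
  [set x | forall i, 0 <= x ord0 i].

Definition pos_orthant (R : realType) (n : nat) : set 'rV[R]_n :=
  [set x | forall i, 0 < x ord0 i].

(* supporting function phi_T(xi) = sup_{t in T} <t, xi>, valued in the
   extended reals (so that it is meaningful for any T) *)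
Definition supp_fun (R : realType) (n : nat) (T : set 'rV[R]_n) (xi : 'rV[R]_n)
  : \bar R := ereal_sup [set (dotp t xi)%:E | t in T].

Definition is_cone (R : realType) (n : nat) (G : set 'rV[R]_n) :=
  forall xi t, G xi -> 0 <= t -> G (t *: xi).

Definition dual_cone (R : realType) (n : nat) (G : set 'rV[R]_n) : set 'rV[R]_n :=
  [set x | forall xi, G xi -> 0 <= dotp x xi].

Definition Ghull (R : realType) (n : nat) (G S : set 'rV[R]_n) : set 'rV[R]_n :=
  [set x | @nonneg_orthant R n x /\
           forall xi, G xi -> ((dotp x xi)%:E <= supp_fun S xi)%E].

Definition set_diff_mink (R : realType) (n : nat) (S T : set 'rV[R]_n) : set 'rV[R]_n :=
  [set s - t | s in S & t in T].

Definition extreme_point (R : realType) (n : nat) (A : set 'rV[R]_n) (x : 'rV[R]_n) :=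
  A x /\ forall y z (t : R), A y -> A z -> 0 < t < 1 ->
    x = t *: y + (1 - t) *: z -> y = z.

(* Main.v *)
Require Import Defs.
From HB Require Import structures.
From mathcomp Require Import all_boot all_order all_algebra.
From mathcomp Require Import all_classical all_reals all_analysis.
From mathcomp Require Import ring lra.
Import Order.TTheory GRing.Theory Num.Theory.
Import numFieldNormedType.Exports.
Local Open Scope classical_set_scope.
Local Open Scope ring_scope.

Section Aux.
Context {R : realType} {n : nat}.
Local Notation V := 'rV[R]_n.
Implicit Types (x y z u w : V).

Lemma dotpC x y : dotp x y = dotp y x.
Proof. by rewrite /dotp; apply: eq_bigr => i _; rewrite mulrC. Qed.
Lemma dotpDl x y z : dotp (x + y) z = dotp x z + dotp y z.
Proof. by rewrite /dotp -big_split; apply: eq_bigr => i _; rewrite mxE mulrDl. Qed.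
Lemma dotpZl (a : R) x z : dotp (a *: x) z = a * dotp x z.
Proof. by rewrite /dotp mulr_sumr; apply: eq_bigr => i _; rewrite mxE mulrA. Qed.
Lemma dotpNl x z : dotp (- x) z = - dotp x z.
Proof. by rewrite /dotp -sumrN; apply: eq_bigr => i _; rewrite mxE mulNr. Qed.
Lemma dotpBl x y z : dotp (x - y) z = dotp x z - dotp y z.
Proof. by rewrite dotpDl dotpNl. Qed.
Lemma dotp0l z : dotp 0 z = 0.
Proof. by rewrite /dotp big1 // => i _; rewrite mxE mul0r. Qed.
Lemma dotpDr x y z : dotp z (x + y) = dotp z x + dotp z y.
Proof. by rewrite dotpC dotpDl !(dotpC z). Qed.
Lemma dotpZr (a : R) x z : dotp z (a *: x) = a * dotp z x.
Proof. by rewrite dotpC dotpZl dotpC. Qed.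
Lemma dotpNr x z : dotp z (- x) = - dotp z x.
Proof. by rewrite dotpC dotpNl dotpC. Qed.
Lemma dotpBr x y z : dotp z (x - y) = dotp z x - dotp z y.
Proof. by rewrite dotpDr dotpNr. Qed.
Lemma dotp0r z : dotp z 0 = 0.
Proof. by rewrite dotpC dotp0l. Qed.

Lemma sum_ge_term (F : 'I_n -> R) i : (forall j, 0 <= F j) -> F i <= \sum_j F j.
Proof.
move=> F0; rewrite (bigD1 i) //= lerDl; exact: sumr_ge0.
Qed.

Lemma dotpvv_ge0 x : 0 <= dotp x x.
Proof. by apply: sumr_ge0 => i _; rewrite -expr2 sqr_ge0. Qed.

Lemma coord_sq_le x i : x ord0 i ^+ 2 <= dotp x x.
Proof. by rewrite expr2; apply: (sum_ge_term (fun j => x ord0 j * x ord0 j)) => j; rewrite -expr2 sqr_ge0. Qed.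

Lemma dotpvv_eq0 x : dotp x x = 0 -> x = 0.
Proof.
move=> h; apply/rowP => i; rewrite mxE.
have := coord_sq_le x i; rewrite h => h2.
apply/eqP; rewrite -sqrf_eq0 eq_le h2 sqr_ge0 //.
Qed.

Lemma cont_sum (T : topologicalType) (I : Type) (r : seq I) (F : I -> T -> R) :
  (forall i, continuous (F i)) -> continuous (fun t => \sum_(i <- r) F i t).
Proof.
move=> Fc t; elim: r => [|a r IH].
  under eq_fun do rewrite big_nil. exact: cvg_cst.
under eq_fun do rewrite big_cons.
exact: (continuousD (Fc a t) IH).
Qed.

Lemma dotp_contl w : continuous (fun x : V => dotp x w).
Proof.
apply: cont_sum => i t.
apply: (@continuousM _ _ (fun x : V => x ord0 i) (fun=> w ord0 i)).
  exact: coord_continuous.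
exact: cst_continuous.
Qed.

Lemma dotp_contq : continuous (fun x : V => dotp x x).
Proof.
apply: cont_sum => i t.
apply: (@continuousM _ _ (fun x : V => x ord0 i) (fun x : V => x ord0 i)); exact: coord_continuous.
Qed.

Lemma coord_le_norm x i : `|x ord0 i| <= `|x|.
Proof.
rewrite [leRHS]/Num.norm /= mx_normrE.
have /mapP[j Hj ->] : `|x ord0 i| \in [seq `|x k.1 k.2| | k : 'I_1 * 'I_n].
  by apply/mapP; exists (ord0, i) => //=; rewrite mem_enum.
by apply/bigmax_geP; right => /=; exists j.
Qed.

Lemma norm_le_coord x M : 0 <= M -> (forall i, `|x ord0 i| <= M) -> `|x| <= M.
Proof.
move=> M0 h; rewrite [leLHS]/Num.norm /= mx_normrE.
apply: bigmax_le => // -[a b] _ /=; rewrite (ord1 a); exact: h.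
Qed.

Lemma bounded_coord (A : set V) M : (forall v, A v -> forall i, `|v ord0 i| <= M) ->
  bounded_set A.
Proof.
move=> h; rewrite /bounded_near; exists (Num.max M 0); split; first exact: num_real.
move=> M' hM' v Av /=; apply: norm_le_coord.
  by apply: le_trans (ltW hM'); rewrite le_max lexx orbT.
move=> i; apply: le_trans (h v Av i) _; apply: le_trans (ltW hM').
by rewrite le_max lexx.
Qed.

Lemma conv_comb (A : set V) x y (t : R) :
  convex_set (A : set (convex_lmodType V)) -> A x -> A y -> 0 <= t -> t <= 1 ->
  A (t *: x + (1 - t) *: y).
Proof.
move=> cA Ax Ay t0 t1.
have := cA x y (Itv01 t0 t1); rewrite !inE; exact.
Qed.


Lemma compact_coord (A : set V) : compact A ->
  exists M, forall v, A v -> forall i, `|v ord0 i| <= M.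
Proof.
move=> cA; have [M [_ h]] := compact_bounded cA.
exists (M + 1) => v Av i; apply: le_trans (coord_le_norm v i) _.
by apply: (h (M + 1)) => //; rewrite ltrDl.
Qed.

Lemma closed_dotle w c : closed [set x : V | dotp x w <= c].
Proof.
have := @preimage_closed _ R (fun x : V => dotp x w) [set r | r <= c] (fun x _ => dotp_contl w x).
by apply; exact: closed_le.
Qed.

Lemma closed_dotge w c : closed [set x : V | c <= dotp x w].
Proof.
have := @preimage_closed _ R (fun x : V => dotp x w) [set r | c <= r] (fun x _ => dotp_contl w x).
by apply; exact: closed_ge.
Qed.

Lemma qsub u w (t : R) : dotp (u - t *: w) (u - t *: w) =
  dotp u u - 2 * t * dotp u w + t * (t * dotp w w).
Proof. rewrite !(dotpBl, dotpBr, dotpZl, dotpZr) (dotpC w u); ring. Qed.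

Lemma proj_ineq (C : set V) x p :
  (forall c, C c -> forall t, 0 < t -> t <= 1 -> C (p + t *: (c - p))) ->
  (forall c, C c -> dotp (x - p) (x - p) <= dotp (x - c) (x - c)) ->
  forall c, C c -> dotp (x - p) (c - p) <= 0.
Proof.
move=> seg mn c Cc.
set a := dotp (x - p) (c - p); set b := dotp (c - p) (c - p).
have b0 : 0 <= b := dotpvv_ge0 _.
have key t : 0 < t -> t <= 1 -> 2 * a <= t * b.
  move=> t0 t1; have := mn _ (seg c Cc t t0 t1).
  have -> : x - (p + t *: (c - p)) = (x - p) - t *: (c - p) by rewrite opprD addrA.
  rewrite qsub -/a -/b => h.
  have h2 : t * (2 * a) <= t * (t * b) by lra.
  by rewrite -(ler_pM2l t0).
rewrite leNgt; apply/negP => a0.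
have ab0 : 0 < a + b by lra.
have := key (a / (a + b)) (divr_gt0 a0 ab0).
rewrite ler_pdivrMr // mul1r lerDl b0 => /(_ isT).
rewrite mulrAC ler_pdivlMr //.
nra.
Qed.


Lemma coord_bound (v : V) i : `|v ord0 i| <= 1 + dotp v v.
Proof.
have := coord_sq_le v i; have := normr_ge0 (v ord0 i).
rewrite -real_normK ?num_real // => h0 h.
suff : `|v ord0 i| <= 1 + `|v ord0 i| ^+ 2 by lra.
rewrite expr2; nra.
Qed.

Lemma contq_sub a : continuous (fun g : V => dotp (a - g) (a - g)).
Proof.
move=> g.
have h1 : {for g, continuous (fun g : V => a - g)}.
  apply: (@continuousB _ _ _ (fun=> a) id g); [exact: cst_continuous | exact: cvg_id].
exact: (continuous_comp h1 (dotp_contq _)).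
Qed.

Lemma closed_qle a c : closed [set g : V | dotp (a - g) (a - g) <= c].
Proof.
have := @preimage_closed _ R (fun g : V => dotp (a - g) (a - g)) [set r | r <= c] (fun x _ => contq_sub a x).
by apply; exact: closed_le.
Qed.

Lemma cone_add (G : set V) : convex_set (G : set (convex_lmodType V)) -> is_cone G ->
  forall a b, G a -> G b -> G (a + b).
Proof.
move=> cvG coG a b Ga Gb.
have h := @conv_comb G a b (2^-1) cvG Ga Gb.
have := coG _ 2 (h _ _) _.
have -> : 2 *: (2^-1 *: a + (1 - 2^-1) *: b) = a + b.
  by apply/rowP => i; rewrite !mxE; field.
apply; lra.
Unshelve. all: lra.
Qed.

Lemma bipolar (G : set V) : closed G -> convex_set (G : set (convex_lmodType V)) -> is_cone G ->
  G !=set0 -> dual_cone (dual_cone G) `<=` G.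
Proof.
move=> cG cvG coG [g0 Gg0] xi dxi; apply: contrapT => nG.
have G0 : G 0 by have := coG g0 0 Gg0 (lexx 0); rewrite scale0r.
pose f g := dotp (xi - g) (xi - g).
pose K := G `&` [set g | f g <= f 0].
have K0 : K 0 by split => //; rewrite /= lexx.
have Kc : compact K.
  apply: bounded_closed_compact; last by apply: closedI => //; exact: closed_qle.
  apply: (@bounded_coord _ (2 * (1 + f 0))) => g [_ Kg] i.
  have -> : g ord0 i = xi ord0 i - (xi - g) ord0 i by rewrite !mxE; ring.
  apply: le_trans (ler_normB _ _) _.
  have h1 := coord_bound xi i; have h2 := coord_bound (xi - g) i.
  rewrite /f subr0 in Kg h1 *; move: Kg => /= Kg; lra.
have [gs gsK gsmin] := compact_EVT_min (ex_intro _ 0 K0) Kc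
  (continuous_subspaceT (fun x => contq_sub xi x)).
move: gsK; rewrite inE => -[Ggs Kgs].
have mnG : forall g, G g -> f gs <= f g.
  move=> g Gg; have [le|lt] := leP (f g) (f 0).
    by apply: gsmin; rewrite inE.
  by apply: le_trans Kgs (ltW lt).
have hq := @proj_ineq G xi gs.
have {hq} hq : forall c, G c -> dotp (xi - gs) (c - gs) <= 0.
  apply: hq => //.
  move=> c Gc t t0 t1.
  have -> : gs + t *: (c - gs) = t *: c + (1 - t) *: gs.
    by apply/rowP => i; rewrite !mxE; ring.
  apply: conv_comb => //; lra.
set eta := xi - gs.
have dn : forall g, G g -> dotp eta g <= 0.
  move=> g Gg; have := hq _ (@cone_add G cvG coG gs g Ggs Gg).
  by rewrite [gs + g]addrC addrK.
have : dual_cone G (- eta) by move=> g Gg; rewrite dotpNl oppr_ge0 dn.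
move/dxi; rewrite dotpNr oppr_ge0 => h1.
have h2 := hq _ G0; rewrite sub0r dotpNr oppr_le0 in h2.
have : xi = eta + gs by rewrite /eta subrK.
move=> exi; rewrite exi dotpDl (dotpC gs) in h1.
have h3 : dotp eta eta <= 0 by lra.
have : dotp eta eta = 0 by apply/eqP; rewrite eq_le h3 dotpvv_ge0.
move/dotpvv_eq0 => e0; apply: nG; by rewrite exi e0 add0r.
Qed.

End Aux.
Section Main.
Context {R : realType} {n : nat}.
Local Notation V := 'rV[R]_n.

Lemma supp_ub (T : set V) xi t : T t -> ((dotp t xi)%:E <= supp_fun T xi)%E.
Proof. by move=> Tt; apply: ereal_sup_ubound; exists t. Qed.

Lemma supp_le (T : set V) xi c : (forall t, T t -> dotp t xi <= c) ->
  (supp_fun T xi <= c%:E)%E.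
Proof. by move=> h; apply: ge_ereal_sup => _ [t Tt <-]; rewrite lee_fin h. Qed.

Lemma S_sub_hull (S G : set V) : S `<=` @nonneg_orthant R n -> S `<=` Ghull G S.
Proof. by move=> Sp s Ss; split; [exact: Sp | move=> xi _; exact: supp_ub]. Qed.

Lemma supp_hull (S G : set V) : S `<=` @nonneg_orthant R n ->
  forall xi, G xi -> supp_fun (Ghull G S) xi = supp_fun S xi.
Proof.
move=> Sp xi Gxi; apply/eqP; rewrite eq_le; apply/andP; split.
  by apply: ge_ereal_sup => _ [y [_ Hy] <-]; exact: Hy.
apply: ereal_sup_le => _ [s Ss <-]; exists s => //; exact: S_sub_hull.
Qed.

Lemma diff_sub_hull (S G : set V) :
  set_diff_mink S (dual_cone G) `&` @nonneg_orthant R n `<=` Ghull G S.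
Proof.
move=> _ [[s Ss [t Gt <-]] xp]; split => // xi Gxi.
apply: le_trans (@supp_ub S xi s Ss); rewrite lee_fin dotpBl.
have := Gt xi Gxi; lra.
Qed.


Lemma qconv (y z : V) (t : R) :
  dotp (t *: y + (1 - t) *: z) (t *: y + (1 - t) *: z) =
  t * dotp y y + (1 - t) * dotp z z - t * (1 - t) * dotp (y - z) (y - z).
Proof. rewrite !(dotpDl, dotpDr, dotpNl, dotpNr, dotpZl, dotpZr) (dotpC z y); ring. Qed.

Lemma hull_box (S G : set V) : compact S -> S 0 -> G `&` @pos_orthant R n !=set0 ->
  exists b, forall y, Ghull G S y -> forall i, 0 <= y ord0 i <= b.
Proof.
move=> cS S0 [xi0 [Gxi0 Pxi0]].
have [Ms hMs] := @compact_coord _ _ S cS.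
pose c0 := \sum_i Ms * `|xi0 ord0 i|.
have c0ge : forall s, S s -> dotp s xi0 <= c0.
  move=> s Ss; apply: ler_sum => i _.
  apply: le_trans (ler_norm _) _; rewrite normrM.
  by apply: ler_wpM2r; [exact: normr_ge0 | exact: hMs].
have c00 : 0 <= c0 by have := c0ge 0 S0; rewrite dotp0l.
exists (\sum_j c0 / xi0 ord0 j) => y [yp yH] i; rewrite yp /=.
have h1 : dotp y xi0 <= c0.
  by have := le_trans (yH xi0 Gxi0) (@supp_le S xi0 c0 c0ge); rewrite lee_fin.
have h2 : y ord0 i * xi0 ord0 i <= dotp y xi0.
  apply: (sum_ge_term (fun j => y ord0 j * xi0 ord0 j)) => j.
  exact: mulr_ge0 (yp j) (ltW (Pxi0 j)).
apply: le_trans (sum_ge_term (fun j => c0 / xi0 ord0 j) i _).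
  by rewrite ler_pdivlMr //; apply: le_trans h1.
move=> j; exact: divr_ge0 c00 (ltW (Pxi0 j)).
Qed.

Arguments hull_box {S G}.

Lemma hull_closed (S G : set V) : closed (Ghull G S).
Proof.
have -> : Ghull G S = (\bigcap_(i in [set: 'I_n]) [set y : V | 0 <= y ord0 i]) `&`
   (\bigcap_(xi in G) [set y : V | ((dotp y xi)%:E <= supp_fun S xi)%E]).
  apply/seteqP; split => y.
    by move=> [yp yH]; split => [i _|xi Gxi] /=; [exact: yp | exact: yH].
  by move=> [yp yH]; split => [i|xi Gxi]; [exact: yp | exact: yH].
apply: closedI; apply: closed_bigI => i _.
  have := @preimage_closed _ R (fun y : V => y ord0 i) [set r | 0 <= r] (fun x _ => @coord_continuous R 1 n ord0 i x).
  by apply; exact: closed_ge.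
case: (supp_fun S i) => [r||].
- have -> : [set y : V | ((dotp y i)%:E <= r%:E)%E] = [set y : V | dotp y i <= r].
    by apply/seteqP; split => y /=; rewrite lee_fin.
  exact: closed_dotle.
- have -> : [set y : V | ((dotp y i)%:E <= +oo)%E] = setT.
    by apply/seteqP; split => y //= _; rewrite leey.
  exact: closedT.
- have -> : [set y : V | ((dotp y i)%:E <= -oo)%E] = set0.
    by apply/seteqP; split => y //=; rewrite leeNy_eq.
  exact: closed0.
Qed.


Lemma hull_compact (S G : set V) : compact S -> S 0 -> G `&` @pos_orthant R n !=set0 ->
  compact (Ghull G S).
Proof.
move=> cS S0 GP; have [b hb] := hull_box cS S0 GP.
apply: bounded_closed_compact; last exact: hull_closed.
apply: (@bounded_coord _ _ _ b) => y Hy i.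
by have /andP[h1 h2] := hb y Hy i; rewrite ger0_norm.
Qed.

Arguments hull_compact {S G}.

Lemma part3 (S G : set V) : compact S -> convex_set (S : set (convex_lmodType V)) ->
  S `<=` @nonneg_orthant R n -> S 0 -> G `&` @pos_orthant R n !=set0 ->
  (forall xi x, extreme_point (Ghull G S) x ->
          exists2 eta, G eta &
            dotp x xi <= dotp x eta /\ supp_fun S eta = supp_fun S xi) ->
  S = Ghull G S.
Proof.
move=> cS cvS Sp S0 GP H.
apply/seteqP; split; first exact: S_sub_hull.
move=> x Hx; apply: contrapT => nSx.
have [p pS pmin] := @compact_EVT_min V R (fun y => dotp (x - y) (x - y)) S (ex_intro _ 0 S0) cS
  (continuous_subspaceT (fun y => contq_sub x y)).
move: pS; rewrite inE => pS.
have hq := @proj_ineq _ _ S x p.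
have {hq} hq : forall c, S c -> dotp (x - p) (c - p) <= 0.
  apply: hq => [c Sc t t0 t1|c Sc]; last by apply: pmin; rewrite inE.
  have -> : p + t *: (c - p) = t *: c + (1 - t) *: p.
    by apply/rowP => i; rewrite !mxE; ring.
  apply: conv_comb => //; lra.
set xi := x - p.
set d := dotp xi xi.
have d0 : 0 < d.
  rewrite lt_neqAle dotpvv_ge0 andbT; apply/eqP => /esym /dotpvv_eq0 /eqP.
  by rewrite subr_eq0 => /eqP xp; apply: nSx; rewrite xp.
have hs : forall s, S s -> dotp s xi <= dotp x xi - d.
  move=> s Ss; have := hq s Ss; rewrite -/xi dotpBr => h.
  have : d = dotp xi x - dotp xi p by rewrite /d {2}/xi dotpBr.
  rewrite !(dotpC _ xi); lra.
have hsup : (supp_fun S xi <= (dotp x xi - d)%:E)%E := @supp_le S xi _ hs.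
have [b hb] := hull_box cS S0 GP.
pose Bq := \sum_(i < n) b * b.
have hBq : forall y, Ghull G S y -> dotp y y <= Bq.
  move=> y Hy; apply: ler_sum => i _.
  have /andP[h1 h2] := hb y Hy i; exact: ler_pM.
have Bq0 : 0 <= Bq := le_trans (dotpvv_ge0 x) (hBq x Hx).
pose e := d / (2 * (Bq + 1)).
have e0 : 0 < e by apply: divr_gt0 => //; lra.
have eB : e * Bq < d.
  have : e * (2 * (Bq + 1)) = d by rewrite /e mulfVK //; lra.
  nra.
pose g (y : V) := dotp y xi + e * dotp y y.
have gc : continuous g.
  move=> y; apply: (@continuousD _ _ _ (fun y : V => dotp y xi) (fun y : V => e * dotp y y)); first exact: dotp_contl.
  apply: (@continuousM _ _ (fun=> e) (fun y : V => dotp y y)); [exact: cst_continuous | exact: dotp_contq].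
have [x' x'H x'max] := @compact_EVT_max V R g (Ghull G S) (ex_intro _ x Hx) (hull_compact cS S0 GP)
  (continuous_subspaceT gc).
move: x'H; rewrite inE => x'H.
have ext : extreme_point (Ghull G S) x'.
  split => // y z t Hy Hz /andP[t0 t1] ex.
  have gy := x'max y (mem_set Hy); have gz := x'max z (mem_set Hz).
  have hq0 := dotpvv_ge0 (y - z).
  have tt : t * g y + (1 - t) * g z - g x' = e * (t * (1 - t)) * dotp (y - z) (y - z).
    rewrite /g ex qconv [dotp (_ + _) xi]dotpDl !dotpZl; ring.
  have : e * (t * (1 - t)) * dotp (y - z) (y - z) <= 0.
    rewrite -tt.
    have t0' : 0 <= t by lra.
    have t1' : 0 <= 1 - t by lra.
    nra.
  have pos : 0 < e * (t * (1 - t)) by apply: mulr_gt0 => //; apply: mulr_gt0 => //; lra.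
  rewrite pmulr_rle0 // => hle.
  have : dotp (y - z) (y - z) = 0 by apply/eqP; rewrite eq_le hle hq0.
  by move/dotpvv_eq0/eqP; rewrite subr_eq0 => /eqP.
have [eta Geta [hle hs2]] := H xi x' ext.
have h3 : ((dotp x' eta)%:E <= (dotp x xi - d)%:E)%E.
  by apply: le_trans (x'H.2 eta Geta) _; rewrite hs2.
rewrite lee_fin in h3.
have gx := x'max x (mem_set Hx); rewrite /g in gx.
have q1 := dotpvv_ge0 x; have q2 := hBq x' x'H.
have : e * dotp x' x' <= e * Bq by rewrite ler_pM2l.
have : 0 <= e * dotp x x by apply: mulr_ge0 => //; exact: ltW.
lra.
Qed.


Lemma hull_sub_diff (S G : set V) : compact S -> convex_set (S : set (convex_lmodType V)) ->
  S 0 -> closed G -> convex_set (G : set (convex_lmodType V)) -> is_cone G -> G !=set0 ->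
  Ghull G S `<=` set_diff_mink S (dual_cone G) `&` @nonneg_orthant R n.
Proof.
move=> cS cvS S0 cG cvG coG GP x [xp xH]; split => //; apply: contrapT => nD.
set Gd := dual_cone G.
have Gd0 : Gd 0 by move=> xi _; rewrite dotp0l.
have GdD : forall a b, Gd a -> Gd b -> Gd (a + b).
  by move=> a b Ga Gb xi Gxi; rewrite dotpDl; apply: addr_ge0; [exact: Ga | exact: Gb].
have Gdc : forall a b t, Gd a -> Gd b -> 0 <= t -> t <= 1 -> Gd (t *: a + (1 - t) *: b).
  move=> a b t Ga Gb t0 t1 xi Gxi; rewrite dotpDl !dotpZl.
  have := Ga xi Gxi; have := Gb xi Gxi; nra.
have Gdcl : closed Gd.
  have -> : Gd = \bigcap_(xi in G) [set y : V | 0 <= dotp y xi].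
    apply/seteqP; split => y.
      by move=> h xi Gxi; exact: h.
    by move=> h xi Gxi; exact: h.
  by apply: closed_bigI => xi _; exact: closed_dotge.
have [Ms hMs] := @compact_coord _ _ S cS.
pose qx := dotp x x.
pose F (st : V * V) := dotp (x - st.1 + st.2) (x - st.1 + st.2).
pose Mb := 2 * (1 + qx) + Ms.
have qx0 : 0 <= qx := dotpvv_ge0 x.
pose B := [set v : V | forall i, v ord0 i \in `[(- Mb), Mb]].
have Bc : compact B.
  apply: (@rV_compact _ _ (fun=> `[(- Mb), Mb]%classic)).
  by move=> _; apply: segment_compact.
have Fc : continuous F.
  move=> st.
  have h1 : {for st, continuous (fun st : V * V => x - st.1 + st.2)}.
    apply: (@continuousD _ _ _ (fun st : V * V => x - st.1) (fun st : V * V => st.2)).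
      apply: (@continuousB _ _ _ (fun=> x) (fun st : V * V => st.1)).
        exact: cst_continuous.
      exact: cvg_fst.
    exact: cvg_snd.
  exact: (continuous_comp h1 (dotp_contq _)).
pose L := [set st : V * V | Gd st.2 /\ F st <= qx].
have Lcl : closed L.
  apply: (@closedI _ (snd @^-1` Gd) (F @^-1` [set r | r <= qx])).
    apply: preimage_closed => // st _; exact: cvg_snd.
  apply: preimage_closed; last exact: closed_le.
  by move=> st _; exact: Fc.
pose K := (S `*` B) `&` L.
have Kc : compact K := compact_closedI (compact_setX cS Bc) Lcl.
have F00 : F (0, 0) = qx by rewrite /F /= subr0 addr0.
have K0 : K (0, 0).
  have B0 : B (0 : V).
    move=> i; have := hMs 0 S0 i => Ms0.
    rewrite in_itv /= -ler_norml; apply: le_trans Ms0 _; rewrite /Mb; lra.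
  split; [split => //|split => //=]; last by rewrite F00.
have [[ss ts] stK stmin] := @compact_EVT_min (V * V)%type R F K (ex_intro _ _ K0) Kc
  (continuous_subspaceT Fc).
move: stK; rewrite inE => -[[/= Sss _] [/= Gdts Fst]].
have Fmin : forall s t, S s -> Gd t -> F (ss, ts) <= F (s, t).
  move=> s t Ss Gdt; have [h|h] := leP (F (s, t)) qx.
    apply: stmin; rewrite inE; split; split => //= i.
    rewrite in_itv /= -ler_norml.
    have -> : t ord0 i = (x - s + t) ord0 i - x ord0 i + s ord0 i by rewrite !mxE; ring.
    have h1 := coord_bound (x - s + t) i; have h2 := coord_bound x i.
    have h3 := hMs s Ss i.
    have h4 := ler_normD ((x - s + t) ord0 i - x ord0 i) (s ord0 i).
    have h5 := ler_normB ((x - s + t) ord0 i) (x ord0 i).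
    rewrite /F /qx /= in h; rewrite /Mb /qx in h2 *; lra.
  by apply: le_trans Fst (ltW h).
pose p := ss - ts.
have Dp : set_diff_mink S Gd p by exists ss => //; exists ts.
have hq := @proj_ineq _ _ (set_diff_mink S Gd) x p.
have {hq} hq : forall c, set_diff_mink S Gd c -> dotp (x - p) (c - p) <= 0.
  apply: hq.
    move=> _ [s Ss [t Gdt <-]] tau t0 t1.
    exists (tau *: s + (1 - tau) *: ss); first by apply: conv_comb => //; lra.
    exists (tau *: t + (1 - tau) *: ts); first by apply: Gdc => //; lra.
    by apply/rowP => i; rewrite !mxE; ring.
  move=> _ [s Ss [t Gdt <-]].
  have -> : x - p = x - ss + ts by apply/rowP => i; rewrite !mxE; ring.
  have -> : x - (s - t) = x - s + t by apply/rowP => i; rewrite !mxE; ring.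
  exact: (Fmin s t Ss Gdt).
set xi := x - p.
have dxi : dual_cone Gd xi.
  move=> t Gdt.
  have := hq (ss - (ts + t)) (ex_intro2 _ _ ss Sss (ex_intro2 _ _ (ts + t) (GdD _ _ Gdts Gdt) erefl)).
  have -> : ss - (ts + t) - p = - t by apply/rowP => i; rewrite !mxE; ring.
  by rewrite dotpNr oppr_le0.
have Gxi := @bipolar _ _ G cG cvG coG GP xi dxi.
have h2 : dotp xi ts <= 0.
  have := hq (ss - 0) (ex_intro2 _ _ ss Sss (ex_intro2 _ _ 0 Gd0 erefl)).
  by have -> : ss - 0 - p = ts by apply/rowP => i; rewrite !mxE; ring.
have h3 : forall s, S s -> dotp s xi <= dotp ss xi.
  move=> s Ss; have := hq (s - ts) (ex_intro2 _ _ s Ss (ex_intro2 _ _ ts Gdts erefl)).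
  have -> : s - ts - p = s - ss by apply/rowP => i; rewrite !mxE; ring.
  by rewrite dotpBr !(dotpC xi) subr_le0.
have h4 : ((dotp x xi)%:E <= (dotp ss xi)%:E)%E.
  by apply: le_trans (xH xi Gxi) _; apply: supp_le.
rewrite lee_fin in h4.
have h5 : dotp xi xi = dotp xi x - dotp xi ss + dotp xi ts.
  by rewrite {1}/xi /p dotpBr dotpBr; ring.
have h6 : dotp xi xi = 0.
  rewrite (dotpC xi ts) in h2.
  apply/eqP; rewrite eq_le dotpvv_ge0 andbT h5 !(dotpC xi); lra.
move/dotpvv_eq0/eqP: h6; rewrite subr_eq0 => /eqP xp'.
by apply: nD; rewrite xp'.
Qed.

End Main.

Theorem proposition5p6 (R : realType) (n : nat) (S G : set 'rV[R]_n) :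
  compact S -> convex_set (S : set (convex_lmodType 'rV[R]_n)) ->
  S `<=` @nonneg_orthant R n -> S 0 ->
  closed G -> convex_set (G : set (convex_lmodType 'rV[R]_n)) -> is_cone G ->
  G != setT -> G `&` @pos_orthant R n !=set0 ->
  [/\ Ghull G S = set_diff_mink S (dual_cone G) `&` @nonneg_orthant R n,
      (forall xi, G xi -> supp_fun (Ghull G S) xi = supp_fun S xi) &
      ((forall xi x, extreme_point (Ghull G S) x ->
          exists2 eta, G eta &
            dotp x xi <= dotp x eta /\ supp_fun S eta = supp_fun S xi) ->
       S = Ghull G S)].
Proof.
move=> cS cvS Sp S0 cG cvG coG GT GP.
have GP' : G !=set0 by case: GP => xi [Gxi _]; exists xi.
split.
- apply/seteqP; split.
    exact: (@hull_sub_diff R n S G cS cvS S0 cG cvG coG GP').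
  exact: diff_sub_hull.
- exact: supp_hull.
- exact: (@part3 R n S G cS cvS Sp S0 GP).
Qed.
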